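(* Let $V\colon\mathbb{R}^3\to S^2$ define a line fibration of $\mathbb{R}^3$ whose induced plane field $\xi=\ker(V_1\,\mathrm{d}x_1+V_2\,\mathrm{d}x_2+V_3\,\mathrm{d}x_3)$ is a contact structure. Suppose that for every line $\ell$ of the fibration there exists a line $\ell'\neq\ell$ of the fibration parallel to $\ell$. Then $\mathrm{d}_pV$ has rank exactly $1$ at every point $p\in\mathbb{R}^3$. *)

(* Defs.v *)
From Stdlib Require Import Reals.
Open Scope R_scope.

Definition R3 : Type := (R * R * R)%type.

Definition coord (p : R3) (i : nat) : R :=
  match p with (x, y, z) => match i with 0%nat => x | 1%nat => y | _ => z end end.

Definition upd (p : R3) (i : nat) (t : R) : R3 :=
  match p with (x, y, z) =>
    match i with 0%nat => (t, y, z) | 1%nat => (x, t, z) | _ => (x, y, t) end end.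

Definition vadd (u v : R3) : R3 :=
  (coord u 0 + coord v 0, coord u 1 + coord v 1, coord u 2 + coord v 2).
Definition vscale (a : R) (u : R3) : R3 :=
  (a * coord u 0, a * coord u 1, a * coord u 2).
Definition vopp (u : R3) : R3 := vscale (-1) u.
Definition vzero : R3 := (0, 0, 0).
Definition dot (u v : R3) : R :=
  coord u 0 * coord v 0 + coord u 1 * coord v 1 + coord u 2 * coord v 2.

Definition continuous3 (f : R3 -> R) : Prop :=
  forall p eps, 0 < eps -> exists delta, 0 < delta /\
    forall q, dot (vadd q (vopp p)) (vadd q (vopp p)) < delta * delta ->
      Rabs (f q - f p) < eps.

Fixpoint Ck (k : nat) (f : R3 -> R) : Prop :=
  match k with
  | O => continuous3 f
  | S k' => forall i, (i < 3)%nat -> exists g : R3 -> R,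
      (forall p, derivable_pt_lim (fun t => f (upd p i t)) (coord p i) (g p))
      /\ Ck k' g
  end.

Definition smooth3 (f : R3 -> R) : Prop := forall k, Ck k f.

(* V : R^3 -> S^2 defines a (smooth, oriented) line fibration: V is smooth,
   unit-valued, and constant along each line p + t V(p); the lines
   {p + t V(p)} are then the fibres, and they partition R^3. *)
Definition line_fibration (V : R3 -> R3) : Prop :=
  (forall i, (i < 3)%nat -> smooth3 (fun p => coord (V p) i))
  /\ (forall p, dot (V p) (V p) = 1)
  /\ (forall p t, V (vadd p (vscale t (V p))) = V p).

(* DV p i j = partial_j V_i (p), i.e. the matrix of d_p V. *)
Definition is_jacobian (V : R3 -> R3) (DV : R3 -> nat -> nat -> R) : Prop :=
  forall p i j, (i < 3)%nat -> (j < 3)%nat ->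
    derivable_pt_lim (fun t => coord (V (upd p j t)) i) (coord p j) (DV p i j).

Definition curl (M : nat -> nat -> R) : R3 :=
  (M 2%nat 1%nat - M 1%nat 2%nat, M 0%nat 2%nat - M 2%nat 0%nat,
   M 1%nat 0%nat - M 0%nat 1%nat).

(* alpha = V1 dx1 + V2 dx2 + V3 dx3; alpha /\ d alpha = (V . curl V) dx1dx2dx3.
   xi = ker alpha is a contact structure iff this never vanishes. *)
Definition is_contact (V : R3 -> R3) (DV : R3 -> nat -> nat -> R) : Prop :=
  forall p, dot (V p) (curl (DV p)) <> 0.

Definition on_line (V : R3 -> R3) (p q : R3) : Prop :=
  exists t, q = vadd p (vscale t (V p)).

Definition every_line_has_parallel (V : R3 -> R3) : Prop :=
  forall p, exists q, ~ on_line V p q /\ (V q = V p \/ V q = vopp (V p)).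

Definition mat_app (M : nat -> nat -> R) (v : R3) : R3 :=
  (M 0%nat 0%nat * coord v 0 + M 0%nat 1%nat * coord v 1 + M 0%nat 2%nat * coord v 2,
   M 1%nat 0%nat * coord v 0 + M 1%nat 1%nat * coord v 1 + M 1%nat 2%nat * coord v 2,
   M 2%nat 0%nat * coord v 0 + M 2%nat 1%nat * coord v 1 + M 2%nat 2%nat * coord v 2).

Definition rank_one (M : nat -> nat -> R) : Prop :=
  (exists v, mat_app M v <> vzero) /\
  (forall v w, exists a b, (a <> 0 \/ b <> 0) /\
     vadd (vscale a (mat_app M v)) (vscale b (mat_app M w)) = vzero).

(* Main.v *)
Require Import Defs.
From Stdlib Require Import Reals Lra Lia Psatz Classical FunctionalExtensionality.
Open Scope R_scope.

Lemma veq (a b : R3) : coord a 0 = coord b 0 -> coord a 1 = coord b 1 -> coord a 2 = coord b 2 -> a = b.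
Proof. destruct a as [[a0 a1] a2], b as [[b0 b1] b2]; simpl; intros; subst; reflexivity. Qed.

Definition cross (a b : R3) : R3 :=
  (coord a 1 * coord b 2 - coord a 2 * coord b 1,
   coord a 2 * coord b 0 - coord a 0 * coord b 2,
   coord a 0 * coord b 1 - coord a 1 * coord b 0).
Definition nrm (a : R3) := sqrt (dot a a).

Ltac vd := repeat match goal with v : R3 |- _ => destruct v as [[? ?] ?] end;
  unfold cross, dot, vadd, vscale, vopp, vzero, mat_app in *; simpl in *.

Lemma dot_ge0 a : 0 <= dot a a. Proof. vd; nra. Qed.
Lemma nrm_ge0 a : 0 <= nrm a. Proof. apply sqrt_pos. Qed.
Lemma nrm_sq a : nrm a * nrm a = dot a a. Proof. apply sqrt_sqrt, dot_ge0. Qed.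
Lemma dot_comm a b : dot a b = dot b a. Proof. vd; ring. Qed.

Lemma le_of_sq x y : 0 <= y -> x * x <= y * y -> Rabs x <= y.
Proof. intros. assert (Rabs x * Rabs x = x * x) by (rewrite <- Rabs_mult; apply Rabs_right; nra).
  pose proof (Rabs_pos x). nra. Qed.

Lemma nrm_le a k : 0 <= k -> dot a a <= k * k -> nrm a <= k.
Proof. intros. pose proof (nrm_sq a). pose proof (nrm_ge0 a).
  rewrite <- (Rabs_right (nrm a)) by lra. apply le_of_sq; nra. Qed.

Lemma lagrange a b : dot (cross a b) (cross a b) = dot a a * dot b b - dot a b * dot a b.
Proof. vd; ring. Qed.

Lemma CS a b : Rabs (dot a b) <= nrm a * nrm b.
Proof. apply le_of_sq. apply Rmult_le_pos; apply nrm_ge0.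
  replace (nrm a * nrm b * (nrm a * nrm b)) with ((nrm a * nrm a) * (nrm b * nrm b)) by ring.
  rewrite !nrm_sq. pose proof (lagrange a b). pose proof (dot_ge0 (cross a b)). nra. Qed.

Lemma nrm_triang a b : nrm (vadd a b) <= nrm a + nrm b.
Proof. apply nrm_le. pose proof (nrm_ge0 a); pose proof (nrm_ge0 b); lra.
  pose proof (CS a b). pose proof (nrm_sq a). pose proof (nrm_sq b).
  assert (dot (vadd a b) (vadd a b) = dot a a + 2 * dot a b + dot b b) by (vd; ring).
  pose proof (Rle_abs (dot a b)). nra. Qed.

Lemma nrm_scale a c : nrm (vscale c a) <= Rabs c * nrm a.
Proof. apply nrm_le. pose proof (nrm_ge0 a); pose proof (Rabs_pos c); nra.
  replace (Rabs c * nrm a * (Rabs c * nrm a)) with ((Rabs c * Rabs c) * (nrm a * nrm a)) by ring.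
  rewrite nrm_sq, <- Rabs_mult, Rabs_right by nra. vd. nra. Qed.



Lemma nrm_cross_unit u z : dot u u = 1 -> nrm (cross u z) <= nrm z.
Proof. intros. apply nrm_le. apply nrm_ge0. rewrite nrm_sq, lagrange, H. nra. Qed.

Lemma triple a u d : dot (cross a u) d = dot a (cross u d). Proof. vd; ring. Qed.

Lemma decomp u d X : dot u u = 1 -> dot X u = 0 ->
  let m := cross u d in let n := cross u m in
  vscale (dot m m) X = vadd (vscale (dot X m) m) (vscale (dot X n) n).
Proof.
  intros Hu HX m n.
  assert (E : vscale (dot u u * dot m m) X = vadd (vadd (vscale (dot X u * dot m m) u)
       (vscale (dot X m * dot u u) m)) (vscale (dot X n) n)).
  { subst m n. vd. apply veq; simpl; ring. }
  rewrite Hu, HX in E. rewrite Rmult_1_l in E. rewrite E. vd. apply veq; simpl; ring.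
Qed.

Lemma sq3_0 x y z : x * x + y * y + z * z = 0 -> x = 0 /\ y = 0 /\ z = 0.
Proof. intros. assert (x*x = 0 /\ y*y = 0 /\ z*z = 0) by (split; [|split]; nra).
  destruct H0 as [? [? ?]]. repeat split; nra. Qed.

Lemma par_of_cross0 u d : dot u u = 1 -> dot (cross u d) (cross u d) = 0 ->
  d = vscale (dot u d) u.
Proof. intros Hu H. destruct u as [[r1 r2] r3], d as [[r4 r5] r6]. vd.
  destruct (sq3_0 _ _ _ H) as [E1 [E2 E3]].
  assert (I1 : r4*(r1*r1+r2*r2+r3*r3) - (r1*r4+r2*r5+r3*r6)*r1 = r3*(r3*r4 - r1*r6) - r2*(r1*r5 - r2*r4)) by ring.
  assert (I2 : r5*(r1*r1+r2*r2+r3*r3) - (r1*r4+r2*r5+r3*r6)*r2 = r1*(r1*r5 - r2*r4) - r3*(r2*r6 - r3*r5)) by ring.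
  assert (I3 : r6*(r1*r1+r2*r2+r3*r3) - (r1*r4+r2*r5+r3*r6)*r3 = r2*(r2*r6 - r3*r5) - r1*(r3*r4 - r1*r6)) by ring.
  rewrite Hu, E1, E2, E3 in *. apply veq; simpl; lra. Qed.

Lemma coplanar_meet a u d : 0 < dot (cross a u) (cross a u) -> dot (cross a u) d = 0 ->
  let G := dot (cross a u) (cross a u) in
  d = vadd (vscale ((dot d a * dot u u - dot d u * dot a u) / G) a)
           (vscale ((dot d u * dot a a - dot d a * dot a u) / G) u).
Proof.
  intros HG H G.
  assert (Id : vscale G d = vadd (vadd (vscale (dot d a * dot u u - dot d u * dot a u) a)
       (vscale (dot d u * dot a a - dot d a * dot a u) u)) (vscale (dot (cross a u) d) (cross a u))).
  { subst G. vd. apply veq; simpl; ring. }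
  rewrite H in Id. fold G in HG. clearbody G.
  generalize dependent (dot d a * dot u u - dot d u * dot a u).
  generalize dependent (dot d u * dot a a - dot d a * dot a u).
  intros be al Id.
  assert (Gn : G <> 0) by lra.
  apply veq.
  - apply (f_equal (fun v => coord v 0)) in Id. revert Id. vd. intros Id.
    apply (Rmult_eq_reg_l G); [|lra]. rewrite Id. field. lra.
  - apply (f_equal (fun v => coord v 1)) in Id. revert Id. vd. intros Id.
    apply (Rmult_eq_reg_l G); [|lra]. rewrite Id. field. lra.
  - apply (f_equal (fun v => coord v 2)) in Id. revert Id. vd. intros Id.
    apply (Rmult_eq_reg_l G); [|lra]. rewrite Id. field. lra.
Qed.
Lemma mvt_gen (f f' : R -> R) a h :
  (forall t, derivable_pt_lim f t (f' t)) ->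
  exists th, 0 <= th <= 1 /\ f (a + h) - f a = h * f' (a + th * h).
Proof.
  intros Hd. destruct (Rtotal_order h 0) as [Hn|[H0|Hp]].
  - destruct (MVT_cor2 f f' (a+h) a) as [c [Hc1 Hc2]]; [lra| intros; apply Hd |].
    exists ((c - a)/h). split.
    + assert (Hi : h * / h = 1) by (field; lra). unfold Rdiv.
      assert (/ h < 0) by (apply Rinv_lt_0_compat; lra). split; nra.
    + replace (a + (c-a)/h*h) with c by (field; lra). lra.
  - subst. exists 0. split; [lra|]. replace (a+0) with a by ring. ring.
  - destruct (MVT_cor2 f f' a (a+h)) as [c [Hc1 Hc2]]; [lra| intros; apply Hd |].
    exists ((c - a)/h). split.
    + assert (Hi : h * / h = 1) by (field; lra). unfold Rdiv.
      assert (0 < / h) by (apply Rinv_0_lt_compat; lra). split; nra.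
    + replace (a + (c-a)/h*h) with c by (field; lra). lra.
Qed.

Lemma cont3_ext (f g : R3 -> R) : (forall r, f r = g r) -> continuous3 f -> continuous3 g.
Proof. intros E C p eps He. destruct (C p eps He) as [d [Hd H]]. exists d; split; auto.
  intros q Hq. rewrite <- !E. auto. Qed.

Section Anal.
Variable V : R3 -> R3.
Variable DV : R3 -> nat -> nat -> R.
Hypothesis hsm : forall i, (i < 3)%nat -> smooth3 (fun p => coord (V p) i).
Hypothesis hJ : is_jacobian V DV.

Lemma partial_cont i j : (i < 3)%nat -> (j < 3)%nat -> continuous3 (fun r => DV r i j).
Proof.
  intros Hi Hj. destruct (hsm i Hi 1%nat j Hj) as [g [Hg Cg]].
  apply (cont3_ext g); auto. intros r. eapply uniqueness_limite. apply Hg. apply hJ; auto.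
Qed.

Lemma abs_small_mult a b eps : Rabs b < eps -> Rabs (a * b) <= Rabs a * eps.
Proof. intros. rewrite Rabs_mult. apply Rmult_le_compat_l. apply Rabs_pos. lra. Qed.

Lemma comp_est p i : (i < 3)%nat -> forall eps, 0 < eps -> exists rho, 0 < rho /\
  forall z, dot z z < rho * rho ->
  Rabs (coord (V (vadd p z)) i - coord (V p) i - coord (mat_app (DV p) z) i)
    <= eps * (Rabs (coord z 0) + Rabs (coord z 1) + Rabs (coord z 2)).
Proof.
  intros Hi eps He.
  destruct (partial_cont i 0%nat Hi ltac:(lia) p eps He) as [d0 [Hd0 C0]].
  destruct (partial_cont i 1%nat Hi ltac:(lia) p eps He) as [d1 [Hd1 C1]].
  destruct (partial_cont i 2%nat Hi ltac:(lia) p eps He) as [d2 [Hd2 C2]].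
  exists (Rmin d0 (Rmin d1 d2)). split.
  { apply Rmin_pos; auto. apply Rmin_pos; auto. }
  intros z Hz.
  assert (R0: Rmin d0 (Rmin d1 d2) <= d0) by apply Rmin_l.
  assert (R1: Rmin d0 (Rmin d1 d2) <= d1) by (eapply Rle_trans; [apply Rmin_r| apply Rmin_l]).
  assert (R2: Rmin d0 (Rmin d1 d2) <= d2) by (eapply Rle_trans; [apply Rmin_r| apply Rmin_r]).
  assert (Rp : 0 < Rmin d0 (Rmin d1 d2)) by (apply Rmin_pos; auto; apply Rmin_pos; auto).
  set (rho := Rmin d0 (Rmin d1 d2)) in *.
  destruct p as [[p0 p1] p2]. destruct z as [[z0 z1] z2].
  unfold dot in Hz; simpl in Hz.
  destruct (mvt_gen (fun t => coord (V (t,p1,p2)) i) (fun t => DV (t,p1,p2) i 0%nat) p0 z0)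
    as [t0 [Ht0 E0]].
  { intros t. exact (hJ (t,p1,p2) i 0%nat Hi ltac:(lia)). }
  destruct (mvt_gen (fun t => coord (V (p0+z0,t,p2)) i) (fun t => DV (p0+z0,t,p2) i 1%nat) p1 z1)
    as [t1 [Ht1 E1]].
  { intros t. exact (hJ (p0+z0,t,p2) i 1%nat Hi ltac:(lia)). }
  destruct (mvt_gen (fun t => coord (V (p0+z0,p1+z1,t)) i) (fun t => DV (p0+z0,p1+z1,t) i 2%nat) p2 z2)
    as [t2 [Ht2 E2]].
  { intros t. exact (hJ (p0+z0,p1+z1,t) i 2%nat Hi ltac:(lia)). }
  simpl in E0, E1, E2.
  assert (A0 : Rabs (DV (p0 + t0 * z0, p1, p2) i 0%nat - DV (p0,p1,p2) i 0%nat) < eps).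
  { apply C0. unfold dot, vadd, vopp, vscale; simpl.
    assert (t0*t0*(z0*z0) <= z0*z0) by (assert (t0*t0 <= 1) by nra; assert (0 <= z0*z0) by nra; nra).
    assert (rho*rho <= d0*d0) by nra. nra. }
  assert (A1 : Rabs (DV (p0 + z0, p1 + t1 * z1, p2) i 1%nat - DV (p0,p1,p2) i 1%nat) < eps).
  { apply C1. unfold dot, vadd, vopp, vscale; simpl.
    assert (t1*t1*(z1*z1) <= z1*z1) by (assert (t1*t1 <= 1) by nra; assert (0 <= z1*z1) by nra; nra).
    assert (rho*rho <= d1*d1) by nra. nra. }
  assert (A2 : Rabs (DV (p0 + z0, p1 + z1, p2 + t2*z2) i 2%nat - DV (p0,p1,p2) i 2%nat) < eps).
  { apply C2. unfold dot, vadd, vopp, vscale; simpl.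
    assert (t2*t2*(z2*z2) <= z2*z2) by (assert (t2*t2 <= 1) by nra; assert (0 <= z2*z2) by nra; nra).
    assert (rho*rho <= d2*d2) by nra. nra. }
  assert (Hm : coord (mat_app (DV (p0,p1,p2)) (z0,z1,z2)) i =
     DV (p0,p1,p2) i 0%nat * z0 + DV (p0,p1,p2) i 1%nat * z1 + DV (p0,p1,p2) i 2%nat * z2).
  { destruct i as [|[|[|i]]]; simpl; try ring. lia. }
  assert (Eq : coord (V (vadd (p0,p1,p2) (z0,z1,z2))) i - coord (V (p0,p1,p2)) i - coord (mat_app (DV (p0,p1,p2)) (z0,z1,z2)) i =
      z0 * (DV (p0 + t0 * z0, p1, p2) i 0%nat - DV (p0,p1,p2) i 0%nat)
       + z1 * (DV (p0 + z0, p1 + t1 * z1, p2) i 1%nat - DV (p0,p1,p2) i 1%nat)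
       + z2 * (DV (p0 + z0, p1 + z1, p2 + t2*z2) i 2%nat - DV (p0,p1,p2) i 2%nat)).
  { rewrite Hm. change (vadd (p0,p1,p2) (z0,z1,z2)) with (p0+z0,p1+z1,p2+z2). lra. }
  rewrite Eq. change (coord (z0,z1,z2) 0) with z0. change (coord (z0,z1,z2) 1) with z1.
  change (coord (z0,z1,z2) 2) with z2.
  pose proof (abs_small_mult z0 _ _ A0).
  pose proof (abs_small_mult z1 _ _ A1).
  pose proof (abs_small_mult z2 _ _ A2).
  eapply Rle_trans. apply Rabs_triang. 
  eapply Rle_trans. apply Rplus_le_compat_r. apply Rabs_triang. lra.
Qed.

Lemma upd_self p j : (j < 3)%nat -> upd p j (coord p j) = p.
Proof. intros. destruct p as [[x y] z]. destruct j as [|[|[|j]]]; simpl; auto; lia. Qed.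

Lemma unit_orth_col p j : (forall r, dot (V r) (V r) = 1) -> (j < 3)%nat ->
  coord (V p) 0 * DV p 0%nat j + coord (V p) 1 * DV p 1%nat j + coord (V p) 2 * DV p 2%nat j = 0.
Proof.
  intros Hu Hj.
  set (f0 := fun t => coord (V (upd p j t)) 0).
  set (f1 := fun t => coord (V (upd p j t)) 1).
  set (f2 := fun t => coord (V (upd p j t)) 2).
  assert (D0 : derivable_pt_lim f0 (coord p j) (DV p 0%nat j)) by (apply hJ; auto; lia).
  assert (D1 : derivable_pt_lim f1 (coord p j) (DV p 1%nat j)) by (apply hJ; auto; lia).
  assert (D2 : derivable_pt_lim f2 (coord p j) (DV p 2%nat j)) by (apply hJ; auto; lia).
  pose proof (derivable_pt_lim_plus _ _ _ _ _ (derivable_pt_lim_plus _ _ _ _ _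
     (derivable_pt_lim_mult _ _ _ _ _ D0 D0) (derivable_pt_lim_mult _ _ _ _ _ D1 D1))
     (derivable_pt_lim_mult _ _ _ _ _ D2 D2)) as Dh.
  assert (Eh : (f0 * f0 + f1 * f1 + f2 * f2)%F = fct_cte 1).
  { apply functional_extensionality. intros t. unfold plus_fct, mult_fct, fct_cte.
    rewrite <- (Hu (upd p j t)). unfold dot, f0, f1, f2. reflexivity. }
  rewrite Eh in Dh. pose proof (uniqueness_limite _ _ _ _ Dh (derivable_pt_lim_const 1 _)) as U.
  unfold f0, f1, f2 in U. rewrite upd_self in U by auto. lra.
Qed.

Lemma orth_all p : (forall r, dot (V r) (V r) = 1) -> forall z, dot (V p) (mat_app (DV p) z) = 0.
Proof.
  intros Hu z. pose proof (unit_orth_col p 0 Hu ltac:(lia)).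
  pose proof (unit_orth_col p 1 Hu ltac:(lia)). pose proof (unit_orth_col p 2 Hu ltac:(lia)).
  set (u := V p) in *. destruct u as [[u0 u1] u2]. destruct z as [[z0 z1] z2].
  unfold dot, mat_app; simpl in *.
  replace (u0 * (DV p 0%nat 0%nat * z0 + DV p 0%nat 1%nat * z1 + DV p 0%nat 2%nat * z2) +
   u1 * (DV p 1%nat 0%nat * z0 + DV p 1%nat 1%nat * z1 + DV p 1%nat 2%nat * z2) +
   u2 * (DV p 2%nat 0%nat * z0 + DV p 2%nat 1%nat * z1 + DV p 2%nat 2%nat * z2))
  with (z0 * (u0 * DV p 0%nat 0%nat + u1 * DV p 1%nat 0%nat + u2 * DV p 2%nat 0%nat)
      + z1 * (u0 * DV p 0%nat 1%nat + u1 * DV p 1%nat 1%nat + u2 * DV p 2%nat 1%nat)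
      + z2 * (u0 * DV p 0%nat 2%nat + u1 * DV p 1%nat 2%nat + u2 * DV p 2%nat 2%nat)) by ring.
  rewrite H, H0, H1. ring.
Qed.

Definition err p z := vadd (V (vadd p z)) (vopp (vadd (V p) (mat_app (DV p) z))).

Lemma diff_vec p eta : 0 < eta -> exists rho, 0 < rho /\
  forall z, nrm z < rho -> nrm (err p z) <= eta * nrm z.
Proof.
  intros He.
  destruct (comp_est p 0 ltac:(lia) (eta/3) ltac:(lra)) as [r0 [Hr0 C0]].
  destruct (comp_est p 1 ltac:(lia) (eta/3) ltac:(lra)) as [r1 [Hr1 C1]].
  destruct (comp_est p 2 ltac:(lia) (eta/3) ltac:(lra)) as [r2 [Hr2 C2]].
  exists (Rmin r0 (Rmin r1 r2)). split.
  { apply Rmin_pos; auto. apply Rmin_pos; auto. }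
  intros z Hz.
  assert (R0: Rmin r0 (Rmin r1 r2) <= r0) by apply Rmin_l.
  assert (R1: Rmin r0 (Rmin r1 r2) <= r1) by (eapply Rle_trans; [apply Rmin_r| apply Rmin_l]).
  assert (R2: Rmin r0 (Rmin r1 r2) <= r2) by (eapply Rle_trans; [apply Rmin_r| apply Rmin_r]).
  set (rho := Rmin r0 (Rmin r1 r2)) in *.
  pose proof (nrm_ge0 z). pose proof (nrm_sq z).
  assert (Hzz : forall r, 0 < r -> rho <= r -> dot z z < r * r) by (intros; nra).
  specialize (C0 z (Hzz r0 Hr0 R0)). specialize (C1 z (Hzz r1 Hr1 R1)). specialize (C2 z (Hzz r2 Hr2 R2)).
  apply nrm_le. pose proof (nrm_ge0 z); nra.
  assert (E : dot (err p z) (err p z) =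
    (coord (V (vadd p z)) 0 - coord (V p) 0 - coord (mat_app (DV p) z) 0)^2 +
    (coord (V (vadd p z)) 1 - coord (V p) 1 - coord (mat_app (DV p) z) 1)^2 +
    (coord (V (vadd p z)) 2 - coord (V p) 2 - coord (mat_app (DV p) z) 2)^2).
  { unfold err. generalize (V (vadd p z)) (V p) (mat_app (DV p) z). intros. vd. ring. }
  rewrite E. clear E.
  set (S := Rabs (coord z 0) + Rabs (coord z 1) + Rabs (coord z 2)) in *.
  assert (HS : S * S <= 3 * dot z z).
  { unfold S. destruct z as [[z0 z1] z2]. unfold dot; simpl.
    pose proof (Rabs_pos z0); pose proof (Rabs_pos z1); pose proof (Rabs_pos z2).
    assert (Rabs z0 * Rabs z0 = z0 * z0) by (rewrite <- Rabs_mult; apply Rabs_right; nra).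
    assert (Rabs z1 * Rabs z1 = z1 * z1) by (rewrite <- Rabs_mult; apply Rabs_right; nra).
    assert (Rabs z2 * Rabs z2 = z2 * z2) by (rewrite <- Rabs_mult; apply Rabs_right; nra).
    pose proof (Rle_0_sqr (Rabs z0 - Rabs z1)). pose proof (Rle_0_sqr (Rabs z1 - Rabs z2)).
    pose proof (Rle_0_sqr (Rabs z0 - Rabs z2)). unfold Rsqr in *. nra. }
  assert (Sq : forall x, Rabs x <= eta/3 * S -> x^2 <= (eta/3)^2 * (S*S)).
  { intros x Hx. pose proof (Rabs_pos x).
    assert (Rabs x * Rabs x = x * x) by (rewrite <- Rabs_mult; apply Rabs_right; nra). nra. }
  apply Sq in C0. apply Sq in C1. apply Sq in C2. nra.
Qed.
End Anal.

Definition ccont (G : R -> R3) := forall i, continuity (fun s => coord (G s) i).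

Lemma cont_plus f g : continuity f -> continuity g -> continuity (fun s => f s + g s).
Proof. apply continuity_plus. Qed.
Lemma cont_minus f g : continuity f -> continuity g -> continuity (fun s => f s - g s).
Proof. apply continuity_minus. Qed.
Lemma cont_mult f g : continuity f -> continuity g -> continuity (fun s => f s * g s).
Proof. apply continuity_mult. Qed.
Lemma cont_const c : continuity (fun _ => c).
Proof. apply continuity_const. intros x y; reflexivity. Qed.
Lemma cont_id : continuity (fun s => s).
Proof. apply derivable_continuous, derivable_id. Qed.

Lemma coord_hi (a : R3) k : coord a (S (S k)) = coord a 2.
Proof. destruct a as [[? ?] ?]; reflexivity. Qed.

Lemma ccont_of (G : R -> R3) : continuity (fun s => coord (G s) 0) -> continuity (fun s => coord (G s) 1) ->
  continuity (fun s => coord (G s) 2) -> ccont G.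
Proof. intros H0 H1 H2 [|[|k]]; auto. Qed.

Lemma ccont_vadd G H : ccont G -> ccont H -> ccont (fun s => vadd (G s) (H s)).
Proof. intros A B. apply ccont_of; simpl; apply cont_plus; auto. Qed.
Lemma ccont_vscale c G : ccont G -> ccont (fun s => vscale c (G s)).
Proof. intros A. apply ccont_of; simpl; apply cont_mult; auto; apply cont_const. Qed.
Lemma ccont_vscale_var G : ccont G -> ccont (fun s => vscale s (G s)).
Proof. intros A. apply ccont_of; simpl; apply cont_mult; auto; apply cont_id. Qed.
Lemma ccont_const a : ccont (fun _ => a).
Proof. intros i. apply cont_const. Qed.
Lemma ccont_vopp G : ccont G -> ccont (fun s => vopp (G s)).
Proof. intros. unfold vopp. apply ccont_vscale; auto. Qed.
Lemma ccont_cross G H : ccont G -> ccont H -> ccont (fun s => cross (G s) (H s)).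
Proof. intros A B. apply ccont_of; simpl; apply cont_minus; apply cont_mult; auto. Qed.
Lemma cont_dot G H : ccont G -> ccont H -> continuity (fun s => dot (G s) (H s)).
Proof. intros A B. unfold dot. repeat apply cont_plus; apply cont_mult; auto. Qed.

Lemma cont_Vi (V : R3 -> R3) i (Vc : continuous3 (fun r => coord (V r) i))
  G : ccont G -> continuity (fun s => coord (V (G s)) i).
Proof.
  intros HG s0; unfold continuity_pt, continue_in, limit1_in, limit_in; intros eps He.
  destruct (Vc (G s0) eps He) as [d [Hd Cd]].
  destruct (HG 0%nat s0 (d/2) ltac:(lra)) as [a0 [Ha0 A0]];
       destruct (HG 1%nat s0 (d/2) ltac:(lra)) as [a1 [Ha1 A1]];
       destruct (HG 2%nat s0 (d/2) ltac:(lra)) as [a2 [Ha2 A2]].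
  exists (Rmin a0 (Rmin a1 a2)); split; [apply Rmin_pos; auto; apply Rmin_pos; auto|].
  intros x [Dx Hx]; simpl in *; unfold R_dist in *.
  assert (B0 : Rabs (coord (G x) 0 - coord (G s0) 0) < d/2) by
        (destruct (Req_dec x s0) as [->|nx]; [rewrite Rminus_diag, Rabs_R0; lra|];
         apply A0; split; [split; auto; exact I|]; simpl; unfold R_dist;
         eapply Rlt_le_trans; [exact Hx| apply Rmin_l]).
  assert (B1 : Rabs (coord (G x) 1 - coord (G s0) 1) < d/2) by
        (destruct (Req_dec x s0) as [->|nx]; [rewrite Rminus_diag, Rabs_R0; lra|];
         apply A1; split; [split; auto; exact I|]; simpl; unfold R_dist;
         eapply Rlt_le_trans; [exact Hx| eapply Rle_trans; [apply Rmin_r|apply Rmin_l]]).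
  assert (B2 : Rabs (coord (G x) 2 - coord (G s0) 2) < d/2) by
        (destruct (Req_dec x s0) as [->|nx]; [rewrite Rminus_diag, Rabs_R0; lra|];
         apply A2; split; [split; auto; exact I|]; simpl; unfold R_dist;
         eapply Rlt_le_trans; [exact Hx| eapply Rle_trans; [apply Rmin_r|apply Rmin_r]]).
  apply Cd.
  destruct (G x) as [[x0 x1] x2]; destruct (G s0) as [[y0 y1] y2]; unfold dot, vadd, vopp, vscale; simpl in *.
  assert (sq : forall t, Rabs t < d/2 -> t * t < d*d/4) by
        (intros t Ht; pose proof (Rabs_pos t);
         assert (Rabs t * Rabs t = t * t) by (rewrite <- Rabs_mult; apply Rabs_right; nra); nra).
  apply sq in B0; apply sq in B1; apply sq in B2; nra.
Qed.

Lemma ccont_V (V : R3 -> R3) (Vc : forall i, (i < 3)%nat -> continuous3 (fun r => coord (V r) i))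
  G : ccont G -> ccont (fun s => V (G s)).
Proof.
  intros HG. apply ccont_of; apply cont_Vi; auto; apply Vc; lia.
Qed.

Lemma M_lin M al be x y : mat_app M (vadd (vscale al x) (vscale be y)) =
  vadd (vscale al (mat_app M x)) (vscale be (mat_app M y)).
Proof. vd. apply veq; simpl; ring. Qed.
Lemma dot_lin al be x y c : dot (vadd (vscale al x) (vscale be y)) c = al * dot x c + be * dot y c.
Proof. vd. ring. Qed.
Lemma sub_eq q p w : vadd q (vopp p) = w -> q = vadd p w.
Proof. intros H. subst w. vd. apply veq; simpl; ring. Qed.
Lemma zero_of_decomp N X m n : 0 < N -> vscale N X = vadd (vscale 0 m) (vscale 0 n) -> X = vzero.
Proof. intros HN H. apply (f_equal (fun v => vscale (/N) v)) in H. revert H. vd. intros H.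
  injection H; intros. apply veq; simpl; field_simplify in H0; field_simplify in H1; field_simplify in H2;
  try lra; nra. Qed.
Lemma normsq_decomp N X m n ph ps : vscale N X = vadd (vscale ph m) (vscale ps n) ->
  ph = dot X m -> ps = dot X n -> N * dot X X = ph * ph + ps * ps.
Proof. intros H E1 E2. apply (f_equal (fun v => dot v X)) in H.
  rewrite dot_lin in H. rewrite (dot_comm m X), (dot_comm n X), <- E1, <- E2 in H.
  rewrite <- H. vd. ring. Qed.
Lemma Vsplit Y u X : Y = vadd u (vadd X (vadd Y (vopp (vadd u X)))).
Proof. vd. apply veq; simpl; ring. Qed.
Lemma fexp u X e p z q : dot (cross (vadd u (vadd X e)) u) (vadd q (vopp (vadd p z))) =
  dot X (cross u (vadd q (vopp p))) + dot e (cross u (vadd q (vopp p))) - dot (vadd X e) (cross u z).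
Proof. vd. ring. Qed.
Lemma cross_split u X e : cross (vadd u (vadd X e)) u = vadd (cross X u) (cross e u).
Proof. vd. apply veq; simpl; ring. Qed.
Lemma sum_zero A B : dot (vadd A B) (vadd A B) = 0 -> dot A A = dot B B.
Proof. intros H. vd. destruct (sq3_0 _ _ _ H) as [E1 [E2 E3]]. nra. Qed.
Lemma cross_self u : dot (cross u u) (cross u u) = 0. Proof. vd. ring. Qed.
Lemma cross_opp_self u : dot (cross (vopp u) u) (cross (vopp u) u) = 0. Proof. vd. ring. Qed.
Lemma lin_bound x y al be : nrm (vadd (vscale al x) (vscale be y)) <= Rabs al * nrm x + Rabs be * nrm y.
Proof. eapply Rle_trans. apply nrm_triang. pose proof (nrm_scale x al). pose proof (nrm_scale y be). lra. Qed.
Lemma dot_zero_r X : dot X vzero = 0. Proof. vd. ring. Qed.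

Lemma abs_le_inv x y : Rabs x <= y -> - y <= x <= y.
Proof. intros. pose proof (Rle_abs x). pose proof (Rle_abs (-x)). rewrite Rabs_Ropp in *. lra. Qed.

Lemma core (V : R3 -> R3) (M : nat -> nat -> R) (p q a b : R3)
 (Vc : forall i, (i < 3)%nat -> continuous3 (fun r => coord (V r) i))
 (inv : forall x t, V (vadd x (vscale t (V x))) = V x)
 (uu : dot (V p) (V p) = 1)
 (orth : forall z, dot (V p) (mat_app M z) = 0)
 (diff : forall eta, 0 < eta -> exists rho, 0 < rho /\ forall z, nrm z < rho ->
    nrm (vadd (V (vadd p z)) (vopp (vadd (V p) (mat_app M z)))) <= eta * nrm z)
 (indep : forall al be, (al <> 0 \/ be <> 0) ->
    vadd (vscale al (mat_app M a)) (vscale be (mat_app M b)) <> vzero)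
 (nl : ~ on_line V p q) (par : V q = V p \/ V q = vopp (V p)) : False.
Proof.
  set (u := V p) in *.
  set (d0 := vadd q (vopp p)).
  set (m := cross u d0). set (n := cross u m). set (N := dot m m).
  assert (HN : 0 < N).
  { destruct (Rle_lt_dec N 0) as [Hle|Hlt]; auto. exfalso.
    assert (N = 0) by (pose proof (dot_ge0 m); unfold N in *; lra).
    pose proof (par_of_cross0 u d0 uu H) as Hd. apply nl. exists (dot u d0).
    apply sub_eq. exact Hd. }
  set (phi := fun z => dot (mat_app M z) m).
  set (psi := fun z => dot (mat_app M z) n).
  assert (Dec : forall z, vscale N (mat_app M z) = vadd (vscale (phi z) m) (vscale (psi z) n)).
  { intros z. apply (decomp u d0 (mat_app M z) uu). rewrite dot_comm. apply orth. }
  assert (Hzero : forall z, phi z = 0 -> psi z = 0 -> mat_app M z = vzero).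
  { intros z H1 H2. apply (zero_of_decomp N _ m n HN). rewrite Dec, H1, H2. reflexivity. }
  assert (phil : forall al be x y, phi (vadd (vscale al x) (vscale be y)) = al * phi x + be * phi y).
  { intros. unfold phi. rewrite M_lin, dot_lin. reflexivity. }
  assert (psil : forall al be x y, psi (vadd (vscale al x) (vscale be y)) = al * psi x + be * psi y).
  { intros. unfold psi. rewrite M_lin, dot_lin. reflexivity. }
  set (D := phi a * psi b - phi b * psi a).
  assert (HD : D <> 0).
  { intros HD0.
    assert (Comb : forall al be, (al <> 0 \/ be <> 0) -> al * phi a + be * phi b = 0 ->
              al * psi a + be * psi b = 0 -> False).
    { intros al be Hnt H1 H2. apply (indep al be Hnt). rewrite <- M_lin. apply Hzero.
      rewrite phil; auto. rewrite psil; auto. }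
    destruct (classic (phi a = 0 /\ phi b = 0)) as [[Pa Pb]|Pn].
    - destruct (classic (psi a = 0 /\ psi b = 0)) as [[Qa Qb]|Qn].
      + apply (Comb 1 0); [left; lra| rewrite Pa, Pb; ring | rewrite Qa, Qb; ring].
      + apply (Comb (psi b) (- psi a)).
        * destruct (Req_dec (psi b) 0); [right|left]; auto. intro. apply Qn. split; lra.
        * rewrite Pa, Pb; ring.
        * ring.
    - apply (Comb (phi b) (- phi a)).
      + destruct (Req_dec (phi b) 0); [right|left]; auto. intro. apply Pn. split; lra.
      + ring.
      + unfold D in HD0. lra. }

  set (v := vadd (vscale (- phi b) a) (vscale (phi a) b)).
  set (w := vadd (vscale (psi b) a) (vscale (- psi a) b)).
  assert (phv : phi v = 0) by (unfold v; rewrite phil; ring).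
  assert (phw : phi w = D) by (unfold w, D; rewrite phil; ring).
  assert (psv : psi v = D) by (unfold v, D; rewrite psil; ring).
  assert (psw : psi w = 0) by (unfold w; rewrite psil; ring).
  set (Z := nrm v + nrm w + 1).
  set (Wc := nrm (mat_app M v) + nrm (mat_app M w)).
  set (nm := nrm m).
  assert (HZ : 1 <= Z) by (unfold Z; pose proof (nrm_ge0 v); pose proof (nrm_ge0 w); lra).
  assert (HW : 0 <= Wc) by (unfold Wc; pose proof (nrm_ge0 (mat_app M v)); pose proof (nrm_ge0 (mat_app M w)); lra).
  assert (Hnm : 0 <= nm) by apply nrm_ge0.
  assert (Hnm2 : nm * nm = N) by apply nrm_sq.
  assert (HaD : 0 < Rabs D) by (apply Rabs_pos_lt; auto).
  assert (HD2 : Rabs D * Rabs D = D * D) by (rewrite <- Rabs_mult; apply Rabs_right; nra).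
  set (eta := Rmin 1 (Rabs D / (4 * Z * (nm + 1)))).
  assert (Heta : 0 < eta).
  { apply Rmin_pos; [lra|]. apply Rdiv_lt_0_compat; [lra|]. nra. }
  assert (Heta1 : eta <= 1) by apply Rmin_l.
  assert (HetaZ : eta * Z * nm <= Rabs D / 4).
  { assert (eta <= Rabs D / (4 * Z * (nm + 1))) by apply Rmin_r.
    assert (eta * (4 * Z * (nm + 1)) <= Rabs D).
    { apply (Rmult_le_compat_r (4 * Z * (nm + 1))) in H; [|nra].
      replace (Rabs D / (4 * Z * (nm + 1)) * (4 * Z * (nm + 1))) with (Rabs D) in H by (field; nra). exact H. }
    nra. }
  destruct (diff eta Heta) as [rho [Hrho Hdiff]].
  set (sg := Rmin (rho / (2 * Z)) (Rabs D / (4 * (Wc + Z) * Z))).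
  assert (Hsg : 0 < sg).
  { apply Rmin_pos; apply Rdiv_lt_0_compat; nra. }
  assert (Hsg1 : sg * Z < rho).
  { assert (sg <= rho / (2 * Z)) by apply Rmin_l.
    apply (Rmult_le_compat_r Z) in H; [|lra].
    replace (rho / (2 * Z) * Z) with (rho / 2) in H by (field; lra). lra. }
  assert (Hsg2 : sg * (Wc + Z) * Z <= Rabs D / 4).
  { assert (sg <= Rabs D / (4 * (Wc + Z) * Z)) by apply Rmin_r.
    apply (Rmult_le_compat_r ((Wc + Z) * Z)) in H; [|nra].
    replace (Rabs D / (4 * (Wc + Z) * Z) * ((Wc + Z) * Z)) with (Rabs D / 4) in H by (field; nra). nra. }
  set (zz := fun s => vadd (vscale sg v) (vscale s w)).
  set (xs := fun s => vadd p (zz s)).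
  set (f := fun s => dot (cross (V (xs s)) u) (vadd q (vopp (xs s)))).
  assert (phz : forall s, phi (zz s) = s * D) by (intros; unfold zz; rewrite phil, phv, phw; ring).
  assert (psz : forall s, psi (zz s) = sg * D) by (intros; unfold zz; rewrite psil, psv, psw; ring).
  assert (NXX : forall s, N * dot (mat_app M (zz s)) (mat_app M (zz s)) = (s * D) * (s * D) + (sg * D) * (sg * D)).
  { intros s. rewrite <- (phz s), <- (psz s). apply normsq_decomp with m n; auto. }
  assert (nz : forall s, Rabs s <= sg -> nrm (zz s) <= sg * Z).
  { intros s Hs. unfold zz. eapply Rle_trans. apply lin_bound. rewrite (Rabs_right sg) by lra.
    pose proof (nrm_ge0 v); pose proof (nrm_ge0 w). unfold Z. nra. }
  assert (nX : forall s, Rabs s <= sg -> nrm (mat_app M (zz s)) <= sg * Wc).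
  { intros s Hs. unfold zz. rewrite M_lin. eapply Rle_trans. apply lin_bound. rewrite (Rabs_right sg) by lra.
    pose proof (nrm_ge0 (mat_app M v)); pose proof (nrm_ge0 (mat_app M w)). unfold Wc. nra. }
  set (e := fun s => vadd (V (xs s)) (vopp (vadd u (mat_app M (zz s))))).
  assert (ne : forall s, Rabs s <= sg -> nrm (e s) <= eta * (sg * Z)).
  { intros s Hs. eapply Rle_trans. apply Hdiff. pose proof (nz s Hs); lra.
    apply Rmult_le_compat_l; [lra|]. apply nz; auto. }
  assert (Vs : forall s, V (xs s) = vadd u (vadd (mat_app M (zz s)) (e s))) by (intros; apply Vsplit).
  assert (fbound : forall s, Rabs s <= sg -> Rabs (f s - s * D) <= sg * Rabs D / 2).
  { intros s Hs. unfold f. rewrite Vs. unfold xs. rewrite fexp. fold d0. fold m.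
    change (dot (mat_app M (zz s)) m) with (phi (zz s)). rewrite phz.
    replace (s * D + dot (e s) m - dot (vadd (mat_app M (zz s)) (e s)) (cross u (zz s)) - s * D)
      with (dot (e s) m - dot (vadd (mat_app M (zz s)) (e s)) (cross u (zz s))) by ring.
    pose proof (CS (e s) m). pose proof (CS (vadd (mat_app M (zz s)) (e s)) (cross u (zz s))).
    pose proof (nrm_triang (mat_app M (zz s)) (e s)).
    pose proof (nrm_cross_unit u (zz s) uu).
    pose proof (ne s Hs). pose proof (nX s Hs). pose proof (nz s Hs).
    pose proof (nrm_ge0 (e s)). pose proof (nrm_ge0 (zz s)). pose proof (nrm_ge0 (cross u (zz s))).
    pose proof (nrm_ge0 (mat_app M (zz s))). pose proof (nrm_ge0 (vadd (mat_app M (zz s)) (e s))).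
    fold nm in H.
    assert (T1 : Rabs (dot (e s) m) <= sg * Rabs D / 4).
    { eapply Rle_trans. exact H. 
      assert (nrm (e s) * nm <= eta * (sg * Z) * nm) by (apply Rmult_le_compat_r; auto).
      nra. }
    assert (T2 : Rabs (dot (vadd (mat_app M (zz s)) (e s)) (cross u (zz s))) <= sg * Rabs D / 4).
    { eapply Rle_trans. exact H0.
      assert (A1 : nrm (vadd (mat_app M (zz s)) (e s)) <= sg * Wc + sg * Z) by nra.
      assert (A2 : nrm (cross u (zz s)) <= sg * Z) by lra.
      assert (nrm (vadd (mat_app M (zz s)) (e s)) * nrm (cross u (zz s)) <= (sg * Wc + sg * Z) * (sg * Z)).
      { apply Rmult_le_compat; auto. }
      nra. }
    eapply Rle_trans. apply Rabs_triang. rewrite Rabs_Ropp. lra. }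

  assert (fc : continuity f).
  { unfold f.
    assert (cx : ccont xs).
    { unfold xs, zz. apply ccont_vadd; [apply ccont_const|]. apply ccont_vadd; [apply ccont_const|].
      apply ccont_vscale_var with (G := fun _ => w). apply ccont_const. }
    apply (cont_dot (fun s => cross (V (xs s)) u) (fun s => vadd q (vopp (xs s)))).
    - apply (ccont_cross (fun s => V (xs s)) (fun _ => u)); [|apply ccont_const].
      apply ccont_V; auto.
    - apply (ccont_vadd (fun _ => q) (fun s => vopp (xs s))); [apply ccont_const|].
      apply ccont_vopp; auto. }
  assert (Hs1 : Rabs sg <= sg) by (rewrite Rabs_right; lra).
  assert (Hs2 : Rabs (- sg) <= sg) by (rewrite Rabs_Ropp, Rabs_right; lra).
  pose proof (fbound sg Hs1) as F1. pose proof (fbound (- sg) Hs2) as F2.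
  assert (Pr : f (- sg) * f sg <= 0).
  { apply abs_le_inv in F1. apply abs_le_inv in F2.
    destruct (Rle_lt_dec 0 D) as [Dp|Dn].
    - rewrite Rabs_right in F1, F2 by lra. assert (0 < f sg) by nra. assert (f (-sg) < 0) by nra. nra.
    - rewrite Rabs_left in F1, F2 by lra. assert (f sg < 0) by nra. assert (0 < f (-sg)) by nra. nra. }
  destruct (IVT_cor f (- sg) sg fc ltac:(lra) Pr) as [s0 [Hs0 Fs0]].
  assert (Hs0' : Rabs s0 <= sg) by (apply Rabs_le; lra).
  set (a' := V (xs s0)).
  assert (Gpos : 0 < dot (cross a' u) (cross a' u)).
  { destruct (Rle_lt_dec (dot (cross a' u) (cross a' u)) 0) as [Hle|]; auto. exfalso.
    assert (H0 : dot (cross a' u) (cross a' u) = 0) by (pose proof (dot_ge0 (cross a' u)); lra).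
    unfold a' in H0. rewrite Vs, cross_split in H0. apply sum_zero in H0.
    rewrite !lagrange, uu in H0. rewrite (dot_comm _ u), orth in H0.
    pose proof (dot_ge0 (e s0)). pose proof (Rle_0_sqr (dot (e s0) u)). unfold Rsqr in *.
    assert (XX : dot (mat_app M (zz s0)) (mat_app M (zz s0)) <= dot (e s0) (e s0)) by nra.
    pose proof (ne s0 Hs0'). pose proof (nrm_sq (e s0)). pose proof (nrm_ge0 (e s0)).
    assert (ee : dot (e s0) (e s0) <= (eta * (sg * Z)) * (eta * (sg * Z))) by nra.
    pose proof (NXX s0).
    assert (sg * D * (sg * D) <= N * ((eta * (sg * Z)) * (eta * (sg * Z)))) by nra.
    assert (Q : N * ((eta * (sg * Z)) * (eta * (sg * Z))) = (eta * Z * nm) * (eta * Z * nm) * (sg * sg)) by (rewrite <- Hnm2; ring).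
    assert (0 <= eta * Z * nm) by (apply Rmult_le_pos; [nra|auto]).
    assert ((eta * Z * nm) * (eta * Z * nm) <= (Rabs D / 4) * (Rabs D / 4)) by nra.
    assert (0 < sg * sg) by nra.
    assert (K1 : (eta * Z * nm) * (eta * Z * nm) * (sg * sg) <= (Rabs D / 4) * (Rabs D / 4) * (sg * sg))
      by (apply Rmult_le_compat_r; lra).
    assert (K2 : (Rabs D / 4) * (Rabs D / 4) * (sg * sg) = D * D * (sg * sg) / 16) by (rewrite <- HD2; field).
    assert (0 < D * D) by nra.
    assert (0 < D * D * (sg * sg)) by nra.
    nra. }
  pose proof (coplanar_meet a' u (vadd q (vopp (xs s0))) Gpos Fs0) as Hm. simpl in Hm.
  set (s1 := (dot (vadd q (vopp (xs s0))) a' * dot u u - dot (vadd q (vopp (xs s0))) u * dot a' u) /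
           dot (cross a' u) (cross a' u)) in Hm.
  set (r1 := (dot (vadd q (vopp (xs s0))) u * dot a' a' - dot (vadd q (vopp (xs s0))) a' * dot a' u) /
           dot (cross a' u) (cross a' u)) in Hm.
  apply sub_eq in Hm.
  assert (Vy : V (vadd (xs s0) (vscale s1 a')) = a') by (unfold a'; apply inv).
  destruct par as [Pq|Pq].
  - assert (Ey : vadd (xs s0) (vscale s1 a') = vadd q (vscale (- r1) (V q))).
    { rewrite Pq, Hm. generalize (xs s0). intros. vd. apply veq; simpl; ring. }
    rewrite Ey, inv, Pq in Vy. rewrite <- Vy in Gpos. pose proof (cross_self u). lra.
  - assert (Ey : vadd (xs s0) (vscale s1 a') = vadd q (vscale r1 (V q))).
    { rewrite Pq, Hm. generalize (xs s0). intros. vd. apply veq; simpl; ring. }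
    rewrite Ey, inv, Pq in Vy. rewrite <- Vy in Gpos. pose proof (cross_opp_self u). lra.
Qed.

Theorem mainTheorem3 (V : R3 -> R3) (DV : R3 -> nat -> nat -> R)
  (hfib : line_fibration V) (hJ : is_jacobian V DV)
  (hcontact : is_contact V DV) (hpar : every_line_has_parallel V) :
  forall p : R3, rank_one (DV p).
Proof.
  destruct hfib as [hsm [hunit hinv]]. intros p. split.
  - destruct (classic (exists v, mat_app (DV p) v <> vzero)) as [H|H]; auto. exfalso.
    apply (hcontact p).
    assert (Z : forall v, mat_app (DV p) v = vzero).
    { intros v. apply NNPP. intro Hn. apply H. exists v. exact Hn. }
    pose proof (Z (1,0,0)) as Z0. pose proof (Z (0,1,0)) as Z1. pose proof (Z (0,0,1)) as Z2.
    unfold mat_app, vzero in Z0, Z1, Z2; simpl in Z0, Z1, Z2.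
    injection Z0; injection Z1; injection Z2; intros.
    unfold curl, dot; simpl. nra.
  - intros v w.
    destruct (classic (exists a b, (a <> 0 \/ b <> 0) /\
      vadd (vscale a (mat_app (DV p) v)) (vscale b (mat_app (DV p) w)) = vzero)) as [H|H]; auto.
    exfalso. destruct (hpar p) as [q [nl par]].
    apply (core V (DV p) p q v w).
    + intros i Hi. exact (hsm i Hi 0%nat).
    + exact hinv.
    + apply hunit.
    + apply (orth_all V DV hJ p hunit).
    + intros eta He. destruct (diff_vec V DV hsm hJ p eta He) as [rho [Hr Hd]].
      exists rho. split; auto.
    + intros al be Hnt Hc. apply H. exists al, be. split; auto.
    + exact nl.
    + exact par.
Qed.
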